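(* For any complex numbers $a,b$ and any natural number $n\ge1$, \[ \Psi(a,b,n)=\sum_{i=0}^{\lfloor n/2\rfloor}\frac{n}{n-i}\binom{n-i}{i}(-a)^i(2a-b)^{\lfloor n/2\rfloor-i},\qquad \Phi(a,b,n)=\sum_{i=0}^{\lfloor (n-1)/2\rfloor}\binom{n-i-1}{i}(-a)^i(2a-b)^{\lfloor (n-1)/2\rfloor-i}. \]
   Context: $\delta(m)=1$ for $m$ odd and $0$ for $m$ even; $\lfloor\cdot\rfloor$ is the floor. $\Psi(a,b,n)$, $\Phi(a,b,n)$ are defined by $\Psi(a,b,0)=2$, $\Psi(a,b,1)=1$, $\Psi(a,b,n+1)=(2a-b)^{\delta(n)}\Psi(a,b,n)-a\Psi(a,b,n-1)$ and $\Phi(a,b,0)=0$, $\Phi(a,b,1)=1$, $\Phi(a,b,n+1)=(2a-b)^{\delta(n+1)}\Phi(a,b,n)-a\Phi(a,b,n-1)$ for $n\ge1$. *)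

(* Defs.v *)
From HB Require Import structures.
From mathcomp Require Import all_boot all_order all_algebra.
From mathcomp Require Import complex.
From mathcomp Require Import Rstruct.
From Stdlib Require Import Rdefinitions.
Set Implicit Arguments. Unset Strict Implicit. Unset Printing Implicit Defensive.
Import Order.TTheory GRing.Theory Num.Theory.
Local Open Scope ring_scope.

Notation CC := (complex R).

Definition delta (m : nat) : nat := odd m.

Fixpoint Psi (a b : CC) (n : nat) {struct n} : CC :=
  match n with
  | 0 => 2
  | 1 => 1
  | (m.+1 as k).+1 => (2 * a - b) ^+ delta k * Psi a b k - a * Psi a b m
  end.

Fixpoint Phi (a b : CC) (n : nat) {struct n} : CC :=
  match n with
  | 0 => 0
  | 1 => 1
  | (m.+1 as k).+1 => (2 * a - b) ^+ delta k.+1 * Phi a b k - a * Phi a b m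
  end.

(* Main.v *)
Require Import Defs.
From HB Require Import structures.
From mathcomp Require Import all_boot all_order all_algebra.
From mathcomp Require Import complex Rstruct.
From mathcomp Require Import ring zify.
Import Order.TTheory GRing.Theory Num.Theory.
Local Open Scope ring_scope.

Section S.
Variables (a b : CC).
Definition T k i : CC := 'C(k-i,i)%:R * (-a)^+i * (2*a-b)^+(k%/2 - i).
Definition F k := \sum_(0 <= i < (k%/2).+1) T k i.

Lemma Fext k N : (k%/2 < N)%N -> \sum_(0<=i<N) T k i = F k.
Proof.
elim: N => // N IH; rewrite ltnS leq_eqVlt => /orP [/eqP <-|lt]; first by [].
rewrite big_nat_recr //= IH // /T bin_small ?mul0r ?addr0 //. lia.
Qed.

Lemma kdiv k : k = (k %/ 2 * 2 + odd k)%N.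
Proof. by rewrite -modn2 -divn_eq. Qed.

Lemma Frec k : F k.+2 = (2*a-b)^+(~~ odd k) * F k.+1 + (-a) * F k.
Proof.
have hk := kdiv k.
rewrite -(@Fext k.+1 (k%/2).+2); last by case: (odd k) hk => /= hk; lia.
have hq : (k.+2 %/2 = (k%/2).+1)%N by lia.
rewrite /F hq big_nat_recl // [in X in _ = _ * X + _]big_nat_recl //.
rewrite mulrDr -addrA; congr (_ + _).
  rewrite /T !subn0 !bin0 !expr0 !mul1r -exprD hq; congr (_ ^+ _).
  by case: (odd k) hk => /= hk; lia.
rewrite !mulr_sumr -big_split /=; apply: eq_bigr => i _.
have pascal : 'C(k.+1 - i, i.+1) = ('C(k-i,i.+1) + 'C(k-i,i))%N.
  case: (leqP i k) => hi; first by rewrite subSn // binS.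
  by rewrite !bin_small //; lia.
rewrite /T subSS pascal natrD !mulrDl; congr (_ + _).
  case: (leqP (i.+1) (k - i)) => hi; last first.
    by rewrite bin_small // !mul0r mulr0.
  rewrite [RHS]mulrC -!mulrA -exprD; congr (_ * (_ * _ ^+ _)).
  by case: (odd k) hk => /= hk; lia.
have -> : ((k.+2 %/ 2) - i.+1 = k %/ 2 - i)%N by lia.
rewrite exprS; ring.
Qed.

Lemma PhiF k : Phi a b k.+1 = F k /\ Phi a b k.+2 = F k.+1.
Proof.
elim: k => [|k [IH1 IH2]].
  split; rewrite /F /T /= big_nat1 /=; first by rewrite !mul1r.
  by rewrite /delta /= !mul1r mulr0 subr0 expr0.
split => //.
have -> : Phi a b k.+3 = (2*a-b)^+delta k.+3 * Phi a b k.+2 - a * Phi a b k.+1 by [].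
by rewrite Frec IH1 IH2 /delta /= negbK mulNr.
Qed.

Lemma PsiPhi n : Psi a b n.+1 = Phi a b n.+2 - a * Phi a b n /\
                 Psi a b n.+2 = Phi a b n.+3 - a * Phi a b n.+1.
Proof.
elim: n => [|n [IH1 IH2]].
  split; rewrite /= /delta /=; ring.
split => //.
have -> : Psi a b n.+3 = (2*a-b)^+delta n.+2 * Psi a b n.+2 - a * Psi a b n.+1 by [].
have -> : Phi a b n.+4 = (2*a-b)^+delta n.+4 * Phi a b n.+3 - a * Phi a b n.+2 by [].
have -> : Phi a b n.+2 = (2*a-b)^+delta n.+2 * Phi a b n.+1 - a * Phi a b n by [].
rewrite IH1 IH2.
have -> : Phi a b n.+2 = (2*a-b)^+delta n.+2 * Phi a b n.+1 - a * Phi a b n by [].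
rewrite /delta /= !negbK; ring.
Qed.

End S.

Theorem theorem5p2 (a b : CC) (n : nat) (hn : (1 <= n)%N) :
  Psi a b n =
    \sum_(0 <= i < (n %/ 2).+1)
       (n%:R / (n - i)%:R) * 'C(n - i, i)%:R * (- a) ^+ i
         * (2 * a - b) ^+ (n %/ 2 - i)
  /\
  Phi a b n =
    \sum_(0 <= i < (n.-1 %/ 2).+1)
       'C(n - i - 1, i)%:R * (- a) ^+ i * (2 * a - b) ^+ (n.-1 %/ 2 - i).
Proof.
case: n hn => // k _; split; last first.
  rewrite (proj1 (PhiF a b k)) /F /=; apply: eq_bigr => i _; rewrite /T.
  by rewrite (_ : (k.+1 - i - 1 = k - i)%N) //; lia.
case: k => [|m].
  by rewrite big_nat1 /= divr1 !mul1r.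
rewrite (proj1 (PsiPhi a b m.+1)) (proj1 (PhiF a b m.+2)) (proj1 (PhiF a b m)).
rewrite /F; set q := (m %/ 2)%N.
have hq : (m.+2 %/2 = q.+1)%N by rewrite /q; lia.
rewrite hq big_nat_recl // [RHS]big_nat_recl // -mulNr mulr_sumr -addrA -big_split /=.
congr (_ + _).
  rewrite /T !subn0 !bin0 hq divff; first by rewrite !mul1r.
  by rewrite pnatr_eq0.
apply: eq_big_nat => i /andP [_ hi].
have hj : ((m.+2 - i.+1)%:R : CC) != 0 by rewrite pnatr_eq0; rewrite /q in hi; lia.
have key : ('C(m.+2 - i.+1, i.+1)%:R + 'C(m - i, i)%:R : CC)
   = m.+2%:R / (m.+2 - i.+1)%:R * 'C(m.+2 - i.+1, i.+1)%:R.
  apply: (mulIf hj); rewrite [RHS]mulrAC divfK // mulrDl -!natrM -natrD.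
  congr (_%:R).
  have md := mul_bin_diag (m.+2 - i.+1) i.
  rewrite (_ : (m - i = (m.+2 - i.+1).-1)%N); last by lia.
  rewrite [X in (_ + X)%N]mulnC md; rewrite /q in hi; nia.
rewrite -key /T hq subSS -/q subSS exprS; ring.
Qed.
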